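(* Let $R$ be a ring and $S$ a (left and right) Ore set in $R$. Then: (1) $\mathcal J(R,S)\neq\emptyset$; (2) $\mathfrak p(S)$ is the least element (w.r.t. inclusion) of $\mathcal J(R,S)$; (3) if, in addition, $S$ is a left and right denominator set with $\mathrm{ass}(S)=\mathfrak a$, then $\mathfrak p(S)=\mathfrak a$.
   Context: Rings are associative with $1$. A multiplicatively closed subset $S$ ($1\in S$, $0\notin S$) is an Ore set if $Sr\cap Rs\ne\emptyset$ and $rS\cap sR\ne\emptyset$ for all $r\in R,s\in S$. It is a (left and right) denominator set if moreover $rs=0$ ($s\in S$) implies $tr=0$ for some $t\in S$, and $sr=0$ implies $rt=0$ for some $t\in S$; then $\mathrm{ass}(S):=\{r\mid sr=0 \text{ for some } s\in S\}$. For a ring $B$ and $T\subseteq B$, $\mathrm{ass}_l(T,B):=\{b\mid tb=0\text{ for some }t\in T\}$, $\mathrm{ass}_r(T,B):=\{b\mid bt=0\text{ for some }t\in T\}$. Define ideals $\mathfrak p_\alpha$ ($\alpha\ge1$ ordinals): $\mathfrak p_1:=\mathrm{ass}_l(S,R)+\mathrm{ass}_r(S,R)$; $\mathfrak p_{\alpha+1}:=\pi_\alpha^{-1}(\mathrm{ass}_l(\pi_\alpha(S),R/\mathfrak p_\alpha)+\mathrm{ass}_r(\pi_\alpha(S),R/\mathfrak p_\alpha))$ with $\pi_\alpha:R\to R/\mathfrak p_\alpha$ canonical; $\mathfrak p_\alpha:=\bigcup_{\beta<\alpha}\mathfrak p_\beta$ for limit $\alpha$; $\mathfrak p(S):=\bigcup_\alpha\mathfrak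 p_\alpha$. $\mathcal J(R,S)$ is the set of ideals $\mathfrak b$ of $R$ such that $\pi_{\mathfrak b}(S)$ is a (left and right) denominator set of $R/\mathfrak b$ with $\mathrm{ass}(\pi_{\mathfrak b}(S))=0$, $\pi_{\mathfrak b}:R\to R/\mathfrak b$ canonical. *)

(* Defs.v *)
(* Subsets/ideals of R are predicates R -> Prop.
   Computations in a quotient ring R/I are written out on representatives:
   an element of R/I is represented by some x : R, and  x = y in R/I  means
   I (x - y).  Taking I := (fun x => x = 0) gives back R itself. *)
From mathcomp Require Import all_boot all_algebra.
Set Implicit Arguments. Unset Strict Implicit. Unset Printing Implicit Defensive.
Import GRing.Theory.
Local Open Scope ring_scope.

Section Defs.
Variable R : nzRingType.

Definition zero_ideal : R -> Prop := fun x => x = 0.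

Definition is_ideal (I : R -> Prop) : Prop :=
  I 0 /\ (forall x y, I x -> I y -> I (x - y)) /\
  (forall r x, I x -> I (r * x)) /\ (forall r x, I x -> I (x * r)).

Definition eqm (I : R -> Prop) (x y : R) : Prop := I (x - y).

(* class of x lies in pi_I(T) *)
Definition memT (I : R -> Prop) (T : R -> Prop) (x : R) : Prop :=
  exists t, T t /\ eqm I x t.

Definition mult_closed_mod (I T : R -> Prop) : Prop :=
  memT I T 1 /\ (forall x y, memT I T x -> memT I T y -> memT I T (x * y)) /\
  (forall x, memT I T x -> ~ eqm I x 0).

Definition ore_mod (I T : R -> Prop) : Prop :=
  mult_closed_mod I T /\
  (forall r s, memT I T s -> exists s' r', memT I T s' /\ eqm I (s' * r) (r' * s)) /\
  (forall r s, memT I T s -> exists s' r', memT I T s' /\ eqm I (r * s') (s * r')).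

Definition denominator_mod (I T : R -> Prop) : Prop :=
  ore_mod I T /\
  (forall r s, memT I T s -> eqm I (r * s) 0 -> exists t, memT I T t /\ eqm I (t * r) 0) /\
  (forall r s, memT I T s -> eqm I (s * r) 0 -> exists t, memT I T t /\ eqm I (r * t) 0).

(* preimage in R of ass_l(pi_I(T), R/I) = {b | t b = 0 for some t in pi_I(T)} *)
Definition ass_l_mod (I T : R -> Prop) : R -> Prop :=
  fun b => exists t, memT I T t /\ eqm I (t * b) 0.

(* preimage in R of ass_r(pi_I(T), R/I) = {b | b t = 0 for some t in pi_I(T)} *)
Definition ass_r_mod (I T : R -> Prop) : R -> Prop :=
  fun b => exists t, memT I T t /\ eqm I (b * t) 0.

Definition is_ore_set (S : R -> Prop) : Prop := ore_mod zero_ideal S.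
Definition is_denominator_set (S : R -> Prop) : Prop := denominator_mod zero_ideal S.
Definition ass (S : R -> Prop) : R -> Prop := ass_l_mod zero_ideal S.

(* pi_I^{-1}( ass_l(pi_I(S), R/I) + ass_r(pi_I(S), R/I) ) *)
Definition p_next (S I : R -> Prop) : R -> Prop :=
  fun x => exists a b, ass_l_mod I S a /\ ass_r_mod I S b /\ eqm I x (a + b).

Definition p_one (S : R -> Prop) : R -> Prop :=
  fun x => exists a b, ass_l_mod zero_ideal S a /\ ass_r_mod zero_ideal S b /\ x = a + b.

End Defs.

(* Ordinals >= 1, Brouwer-style with arbitrary (Type-indexed) suprema:
   ord1 = 1, ordS a = a+1, ordLim I f = sup_i f i. *)
Inductive ord : Type :=
| ord1 : ord
| ordS : ord -> ord
| ordLim : forall I : Type, (I -> ord) -> ord.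

Fixpoint p_alpha (R : nzRingType) (S : R -> Prop) (a : ord) : R -> Prop :=
  match a with
  | ord1 => p_one S
  | ordS b => p_next S (p_alpha S b)
  | @ordLim J f => fun x => exists i, p_alpha S (f i) x
  end.

Definition pS (R : nzRingType) (S : R -> Prop) : R -> Prop :=
  fun x => exists a, p_alpha S a x.

Definition J_set (R : nzRingType) (S : R -> Prop) (b : R -> Prop) : Prop :=
  is_ideal b /\ denominator_mod b S /\ (forall r, ass_l_mod b S r -> b r).

(* Main.v *)
Require Import Defs.
From mathcomp Require Import all_boot all_algebra.
From Stdlib Require Import Classical.
Import GRing.Theory.
Local Open Scope ring_scope.
Set Implicit Arguments. Unset Strict Implicit.

Lemma id0 (R : nzRingType) (I : R -> Prop) : is_ideal I -> I 0.
Proof. by case. Qed.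
Lemma idB (R : nzRingType) (I : R -> Prop) x y : is_ideal I -> I x -> I y -> I (x - y).
Proof. by case=> _ [h _] ; apply: h. Qed.
Lemma idN (R : nzRingType) (I : R -> Prop) y : is_ideal I -> I y -> I (- y).
Proof. by move=> hI hy; rewrite -sub0r; apply: idB => //; apply: id0. Qed.
Lemma idD (R : nzRingType) (I : R -> Prop) x y : is_ideal I -> I x -> I y -> I (x + y).
Proof. by move=> hI hx hy; rewrite -[y]opprK; apply: idB => //; apply: idN. Qed.
Lemma idMl (R : nzRingType) (I : R -> Prop) r x : is_ideal I -> I x -> I (r * x).
Proof. by case=> _ [_ [h _]]; apply: h. Qed.
Lemma idMr (R : nzRingType) (I : R -> Prop) r x : is_ideal I -> I x -> I (x * r).
Proof. by case=> _ [_ [_ h]]; apply: h. Qed.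

Lemma zero_is_ideal (R : nzRingType) : is_ideal (@zero_ideal R).
Proof.
rewrite /zero_ideal; split; first by [].
split; first by move=> x y -> ->; rewrite subrr.
by split=> r x ->; rewrite ?mulr0 ?mul0r.
Qed.

Lemma memT_zero (R : nzRingType) (S : R -> Prop) x : memT (@zero_ideal R) S x <-> S x.
Proof.
split.
  by case=> t [St]; rewrite /eqm /zero_ideal => /subr0_eq ->.
by move=> Sx; exists x; split=> //; rewrite /eqm /zero_ideal subrr.
Qed.

Definition cOre {R : nzRingType} (S : R -> Prop) :=
  [/\ S 1, (forall x y, S x -> S y -> S (x*y)), (forall x, S x -> x <> 0),
   (forall r s, S s -> exists s' r', S s' /\ s' * r = r' * s) &
   (forall r s, S s -> exists s' r', S s' /\ r * s' = s * r')].

Lemma cOreP (R : nzRingType) (S : R -> Prop) : is_ore_set S -> cOre S.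
Proof.
case=> [[m1 [mM m0]] [oL oR]]; split.
- by apply/memT_zero.
- move=> x y Sx Sy; apply/memT_zero; apply: mM; exact/memT_zero.
- move=> x Sx e; apply: (m0 x); first exact/memT_zero.
  by rewrite /eqm /zero_ideal e subrr.
- move=> r s Ss; have [s' [r' [Hs e]]] := oL r s (proj2 (memT_zero S s) Ss).
  exists s', r'; split; first exact/memT_zero.
  by move: e; rewrite /eqm /zero_ideal => /subr0_eq.
- move=> r s Ss; have [s' [r' [Hs e]]] := oR r s (proj2 (memT_zero S s) Ss).
  exists s', r'; split; first exact/memT_zero.
  by move: e; rewrite /eqm /zero_ideal => /subr0_eq.
Qed.

Definition Al {R : nzRingType} (S I : R -> Prop) a := exists s, S s /\ I (s * a).
Definition Ar {R : nzRingType} (S I : R -> Prop) a := exists s, S s /\ I (a * s).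

Lemma assl_Al (R : nzRingType) (S I K : R -> Prop) a : is_ideal K ->
  (forall x, I x -> K x) -> ass_l_mod I S a -> Al S K a.
Proof.
move=> hK hIK [t [[t' [St' e1]] e2]]; exists t'; split => //.
have -> : t' * a = (t * a - 0) - (t - t') * a by rewrite subr0 mulrBl subKr.
by apply: idB => //; [apply: hIK | apply: idMr => //; apply: hIK].
Qed.

Lemma assr_Ar (R : nzRingType) (S I K : R -> Prop) a : is_ideal K ->
  (forall x, I x -> K x) -> ass_r_mod I S a -> Ar S K a.
Proof.
move=> hK hIK [t [[t' [St' e1]] e2]]; exists t'; split => //.
have -> : a * t' = (a * t - 0) - a * (t - t') by rewrite subr0 mulrBr subKr.
by apply: idB => //; [apply: hIK | apply: idMl => //; apply: hIK].
Qed.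

Lemma Al_assl (R : nzRingType) (S K : R -> Prop) a : is_ideal K ->
  Al S K a -> ass_l_mod K S a.
Proof.
move=> hK [s [Ss e]]; exists s; split; last by rewrite /eqm subr0.
by exists s; split => //; rewrite /eqm subrr; apply: id0.
Qed.

Lemma Ar_assr (R : nzRingType) (S K : R -> Prop) a : is_ideal K ->
  Ar S K a -> ass_r_mod K S a.
Proof.
move=> hK [s [Ss e]]; exists s; split; last by rewrite /eqm subr0.
by exists s; split => //; rewrite /eqm subrr; apply: id0.
Qed.

Lemma Al_ideal (R : nzRingType) (S I : R -> Prop) : cOre S -> is_ideal I -> is_ideal (Al S I).
Proof.
case=> S1 SM S0 oL oR hI; split.
  by exists 1; split => //; rewrite mulr0; apply: id0.
split.
  move=> a b [s1 [Ss1 ha]] [s2 [Ss2 hb]].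
  have [s' [r' [Ss' e]]] := oL s1 s2 Ss2.
  exists (s' * s1); split; first exact: SM.
  rewrite mulrBr {2}e -!mulrA; apply: idB => //; exact: idMl.
split.
  move=> r a [s1 [Ss1 ha]]; have [s' [r' [Ss' e]]] := oL r s1 Ss1.
  exists s'; split => //; rewrite mulrA e -mulrA; exact: idMl.
move=> r a [s1 [Ss1 ha]]; exists s1; split => //; rewrite mulrA; exact: idMr.
Qed.

Lemma Ar_ideal (R : nzRingType) (S I : R -> Prop) : cOre S -> is_ideal I -> is_ideal (Ar S I).
Proof.
case=> S1 SM S0 oL oR hI; split.
  by exists 1; split => //; rewrite mul0r; apply: id0.
split.
  move=> a b [s1 [Ss1 ha]] [s2 [Ss2 hb]].
  have [s' [r' [Ss' e]]] := oR s1 s2 Ss2.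
  exists (s1 * s'); split; first exact: SM.
  rewrite mulrBl {2}e !mulrA; apply: idB => //; exact: idMr.
split.
  move=> r a [s1 [Ss1 ha]]; exists s1; split => //; rewrite -mulrA; exact: idMl.
move=> r a [s1 [Ss1 ha]]; have [s' [r' [Ss' e]]] := oR r s1 Ss1.
exists s'; split => //; rewrite -mulrA e mulrA; exact: idMr.
Qed.

Lemma idsub (V : zmodType) (x y a1 a2 b1 b2 : V) :
  (x - y) - ((a1 - a2) + (b1 - b2)) = (x - (a1+b1)) - (y - (a2+b2)).
Proof.
rewrite !opprD !opprK !addrA.
by rewrite [x - y - a1]addrAC [x - a1 - y + a2 - b1]addrAC [x - a1 - y - b1]addrAC.
Qed.

Definition disj {R : nzRingType} (S I : R -> Prop) := forall s, S s -> ~ I s.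
Definition Qn {R : nzRingType} (S I : R -> Prop) x :=
  exists a b, Al S I a /\ Ar S I b /\ I (x - (a+b)).

Lemma pnext_Qn (R : nzRingType) (S I : R -> Prop) x :
  is_ideal I -> p_next S I x <-> Qn S I x.
Proof.
move=> hI; split.
  case=> a [b [ha [hb e]]]; exists a, b; split; first exact: (assl_Al hI (fun _ h => h) ha).
  by split; first exact: (assr_Ar hI (fun _ h => h) hb).
case=> a [b [ha [hb e]]]; exists a, b; split; first exact: Al_assl.
by split; first exact: Ar_assr.
Qed.

Lemma ideal_ext (R : nzRingType) (P Q : R -> Prop) :
  (forall x, P x <-> Q x) -> is_ideal P -> is_ideal Q.
Proof.
move=> h [h0 [hB [hl hr]]]; split; first exact/h.
split; first by move=> x y /h hx /h hy; apply/h; apply: hB.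
by split=> r x /h hx; apply/h; [apply: hl | apply: hr].
Qed.

Lemma Qn_ideal (R : nzRingType) (S I : R -> Prop) :
  cOre S -> is_ideal I -> is_ideal (Qn S I).
Proof.
move=> hS hI; have hL := Al_ideal hS hI; have hR := Ar_ideal hS hI.
split.
  exists 0, 0; split; first exact: id0.
  by split; [exact: id0 | rewrite addr0 subrr; exact: id0].
split.
  move=> x y [a1 [b1 [ha1 [hb1 e1]]]] [a2 [b2 [ha2 [hb2 e2]]]].
  exists (a1 - a2), (b1 - b2); split; first exact: idB.
  by split; [exact: idB | rewrite idsub; exact: idB].
split.
  move=> r x [a [b [ha [hb e]]]]; exists (r * a), (r * b).
  split; first exact: idMl. split; first exact: idMl.
  by rewrite -mulrDr -mulrBr; apply: idMl.
move=> r x [a [b [ha [hb e]]]]; exists (a * r), (b * r).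
split; first exact: idMr. split; first exact: idMr.
by rewrite -mulrDl -mulrBl; apply: idMr.
Qed.

Lemma Qn_disj (R : nzRingType) (S I : R -> Prop) :
  cOre S -> is_ideal I -> disj S I -> disj S (Qn S I).
Proof.
case=> S1 SM S0 oL oR hI hd s Ss [a [b [[s1 [Ss1 ha]] [[s2 [Ss2 hb]] e]]]].
apply: (hd (s1 * s * s2)); first exact: (SM _ _ (SM _ _ Ss1 Ss) Ss2).
have -> : s1 * s * s2 = s1 * (s - (a + b)) * s2 + ((s1 * a) * s2 + s1 * (b * s2)).
  by rewrite !mulrA -!mulrDl -!mulrDr subrK.
apply: (idD hI); first by apply: (idMr _ hI); apply: (idMl _ hI).
apply: (idD hI); first by apply: (idMr _ hI).
by apply: (idMl _ hI).
Qed.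

Lemma next_good (R : nzRingType) (S I : R -> Prop) :
  cOre S -> is_ideal I -> disj S I -> is_ideal (p_next S I) /\ disj S (p_next S I).
Proof.
move=> hS hI hd; split.
  apply: (ideal_ext (P := Qn S I)); last exact: Qn_ideal.
  by move=> x; rewrite pnext_Qn.
by move=> s Ss /(pnext_Qn _ _ hI); apply: Qn_disj.
Qed.

Lemma next_mono (R : nzRingType) (S I K : R -> Prop) :
  (forall x, I x -> K x) -> forall x, p_next S I x -> p_next S K x.
Proof.
move=> h x [a [b [[t [[t' [St' e1]] e2]] [[u [[u' [Su' e3]] e4]] e5]]]].
exists a, b; split; first by exists t; split; [exists t'; split; [|apply: h]|apply: h].
split; first by exists u; split; [exists u'; split; [|apply: h]|apply: h].
exact: h.
Qed.

Lemma pone_next (R : nzRingType) (S : R -> Prop) x :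
  p_one S x <-> p_next S (@zero_ideal R) x.
Proof.
split; case=> a [b [ha [hb e]]]; exists a, b; do 2 (split => //).
  by rewrite /eqm /zero_ideal e subrr.
exact: subr0_eq.
Qed.

Lemma pone0 (R : nzRingType) (S : R -> Prop) : S 1 -> p_one S 0.
Proof.
move=> S1; exists 0, 0; split.
  exists 1; split; first by exists 1; split => //; rewrite /eqm /zero_ideal subrr.
  by rewrite /eqm /zero_ideal mulr0 subrr.
split; last by rewrite addr0.
exists 1; split; first by exists 1; split => //; rewrite /eqm /zero_ideal subrr.
by rewrite /eqm /zero_ideal mul0r subrr.
Qed.

Lemma nonempty0 (R : nzRingType) (S : R -> Prop) : S 1 ->
  forall a, (forall x, ~ p_alpha S a x) \/ p_alpha S a 0.
Proof.
move=> S1; elim=> [|a IH|J f IH] /=.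
- by right; apply: pone0.
- case: IH => [he|h0].
    by left=> x [a' [b [_ [_ e]]]]; exact: he _ e.
  right; exists 0, 0; split.
    exists 1; split; first by exists 1; split => //; rewrite /eqm subrr.
    by rewrite /eqm mulr0 subrr.
  split; last by rewrite /eqm addr0 subrr.
  exists 1; split; first by exists 1; split => //; rewrite /eqm subrr.
  by rewrite /eqm mul0r subrr.
- case: (classic (exists i, p_alpha S (f i) 0)) => [[i hi]|hn].
    by right; exists i.
  left=> x [i hx]; case: (IH i) => [he|h0]; first exact: he _ hx.
  by apply: hn; exists i.
Qed.

Definition Comp {R : nzRingType} (S : R -> Prop) a b :=
  (forall x, p_alpha S a x -> p_alpha S b x) \/ (forall x, p_alpha S b x -> p_alpha S a x).

Lemma comp_sym (R : nzRingType) (S : R -> Prop) a b : Comp S a b -> Comp S b a.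
Proof. by case=> h; [right|left]. Qed.

Lemma comp_lim_r (R : nzRingType) (S : R -> Prop) a (J : Type) (f : J -> ord) :
  (forall i, Comp S a (f i)) -> Comp S a (ordLim f).
Proof.
move=> H; case: (classic (forall i x, p_alpha S (f i) x -> p_alpha S a x)) => h.
  by right=> x /= [i hx]; exact: h i x hx.
case: (not_all_ex_not _ _ h) => i hi.
left=> x hx /=; exists i; case: (H i) => [h1|h2]; first exact: h1.
by exfalso; apply: hi.
Qed.

Lemma comp_base (R : nzRingType) (S : R -> Prop) : S 1 -> forall b, Comp S Defs.ord1 (Defs.ordS b).
Proof.
move=> S1 b; case: (nonempty0 S1 b) => [he|h0].
  by right=> x /= [a [c [_ [_ e]]]]; case: (he _ e).
left=> x /= /pone_next; apply: next_mono => y; rewrite /zero_ideal => ->; exact: h0.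
Qed.

Lemma comp_all (R : nzRingType) (S : R -> Prop) : S 1 -> forall a b, Comp S a b.
Proof.
move=> S1; elim=> [|a IHa|J f IHf] b.
- elim: b => [|b _|J f IHf]; [by left | exact: comp_base | exact: comp_lim_r].
- elim: b => [|b _|J f IHf]; first by apply: comp_sym; apply: comp_base.
    by case: (IHa b) => h; [left|right]; apply: next_mono.
  exact: comp_lim_r.
- by apply: comp_sym; apply: comp_lim_r => i; apply: comp_sym; apply: IHf.
Qed.

Definition Good {R : nzRingType} (S I : R -> Prop) :=
  (forall x, ~ I x) \/ (is_ideal I /\ disj S I).

Lemma union_good (R : nzRingType) (S : R -> Prop) (J : Type) (P : J -> R -> Prop) :
  (forall j, Good S (P j)) ->
  (forall j k, (forall x, P j x -> P k x) \/ (forall x, P k x -> P j x)) ->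
  Good S (fun x => exists j, P j x).
Proof.
move=> hg hc.
have iof : forall j y, P j y -> is_ideal (P j) /\ disj S (P j).
  by move=> j y hy; case: (hg j) => [he|h] //; case: (he _ hy).
case: (classic (exists j x, P j x)) => [[j0 [x0 hx0]]|hn]; last first.
  by left=> x [j hx]; apply: hn; exists j, x.
right; split; last by move=> s Ss [j hx]; exact: (iof j s hx).2 s Ss hx.
split; first by exists j0; apply: id0; exact: (iof j0 x0 hx0).1.
split.
  move=> x y [k1 hx] [k2 hy]; case: (hc k1 k2) => h.
    by exists k2; apply: idB; [exact: (iof k2 y hy).1 | exact: h | exact: hy].
  by exists k1; apply: idB; [exact: (iof k1 x hx).1 | exact: hx | exact: h].
split=> r x [k hx]; exists k.
  by apply: idMl; [exact: (iof k x hx).1 | exact: hx].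
by apply: idMr; [exact: (iof k x hx).1 | exact: hx].
Qed.

Lemma pa_good (R : nzRingType) (S : R -> Prop) : cOre S -> forall a, Good S (p_alpha S a).
Proof.
move=> hS; have hS' := hS; case: hS' => S1 SM S0 oL oR.
elim=> [|a IH|J f IH] /=.
- right; have hz : disj S (@zero_ideal R) by move=> s Ss; rewrite /zero_ideal; exact: S0.
  have [hI hd] := next_good hS (@zero_is_ideal R) hz.
  split; first by apply: (ideal_ext (P := p_next S (@zero_ideal R))) => // x; rewrite pone_next.
  by move=> s Ss /pone_next; apply: hd.
- case: IH => [he|[hI hd]].
    by left=> x [a' [b [_ [_ e]]]]; exact: he _ e.
  by right; apply: next_good.
- apply: (union_good (P := fun i => p_alpha S (f i))) => // j k; exact: comp_all.
Qed.

Lemma pS_good (R : nzRingType) (S : R -> Prop) : cOre S -> is_ideal (pS S) /\ disj S (pS S).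
Proof.
move=> hS; have hS' := hS; case: hS' => S1 SM S0 oL oR.
have : Good S (pS S).
  apply: (union_good (P := fun a => p_alpha S a)); first exact: pa_good.
  by move=> j k; exact: comp_all.
case=> // he; case: (he 0); exists Defs.ord1; exact: pone0.
Qed.

Lemma pS_closed_l (R : nzRingType) (S : R -> Prop) a : cOre S -> Al S (pS S) a -> pS S a.
Proof.
move=> hS [s [Ss [al h]]].
case: (pa_good hS al) => [he|[hI hd]]; first by case: (he _ h).
exists (Defs.ordS al) => /=; apply/(pnext_Qn _ _ hI); exists a, 0; split.
  by exists s.
split; first exact: (id0 (Ar_ideal hS hI)).
by rewrite addr0 subrr; apply: id0.
Qed.

Lemma pS_closed_r (R : nzRingType) (S : R -> Prop) a : cOre S -> Ar S (pS S) a -> pS S a.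
Proof.
move=> hS [s [Ss [al h]]].
case: (pa_good hS al) => [he|[hI hd]]; first by case: (he _ h).
exists (Defs.ordS al) => /=; apply/(pnext_Qn _ _ hI); exists 0, a; split.
  exact: (id0 (Al_ideal hS hI)).
split; first by exists s.
by rewrite add0r subrr; apply: id0.
Qed.

Lemma pS_J (R : nzRingType) (S : R -> Prop) : cOre S -> J_set S (pS S).
Proof.
move=> hS; have hS' := hS; case: hS' => S1 SM S0 oL oR.
have [hI hd] := pS_good hS.
have m1 : forall s, S s -> memT (pS S) S s.
  by move=> s Ss; exists s; split => //; rewrite /eqm subrr; apply: id0.
split => //; split; last first.
  by move=> r hr; apply: pS_closed_l => //; exact: (assl_Al hI (fun _ h => h) hr).
split; last split.
- split; last split.
  + split; first exact: m1.
    split.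
      move=> x y [s [Ss ex]] [s' [Ss' ey]]; exists (s * s'); split; first exact: SM.
      rewrite /eqm.
      have -> : x * y - s * s' = (x - s) * y + s * (y - s') by rewrite mulrBl mulrBr addrA subrK.
      by apply: (idD hI); [apply: (idMr _ hI) | apply: (idMl _ hI)].
    move=> x [s [Ss ex]] e0; apply: (hd s Ss).
    have -> : s = (x - 0) - (x - s) by rewrite subr0 subKr.
    exact: idB.
  + move=> r x [s [Ss ex]]; have [s' [r' [Ss' e]]] := oL r s Ss.
    exists s', r'; split; first exact: m1.
    rewrite /eqm e -mulrBr; apply: (idMl _ hI); rewrite -opprB; exact: idN.
  + move=> r x [s [Ss ex]]; have [s' [r' [Ss' e]]] := oR r s Ss.
    exists s', r'; split; first exact: m1.
    rewrite /eqm e -mulrBl; apply: (idMr _ hI); rewrite -opprB; exact: idN.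
- move=> r x [s [Ss ex]] e; exists 1; split; first exact: m1.
  rewrite /eqm mul1r subr0; apply: pS_closed_r => //; exists s; split => //.
  have -> : r * s = (r * x - 0) - r * (x - s) by rewrite subr0 mulrBr subKr.
  by apply: idB => //; apply: (idMl _ hI).
- move=> r x [s [Ss ex]] e; exists 1; split; first exact: m1.
  rewrite /eqm mulr1 subr0; apply: pS_closed_l => //; exists s; split => //.
  have -> : s * r = (x * r - 0) - (x - s) * r by rewrite subr0 mulrBl subKr.
  by apply: idB => //; apply: (idMr _ hI).
Qed.

Lemma least (R : nzRingType) (S b : R -> Prop) : cOre S -> J_set S b ->
  forall al x, p_alpha S al x -> b x.
Proof.
move=> hS [hb [[hore [dl dr]] hz]].
have hAr : forall r, Ar S b r -> b r.
  move=> r [s [Ss h]]; apply: hz.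
  have [t [ht e]] := dl r s (ex_intro _ s (conj Ss (eq_ind_r b (id0 hb) (subrr s))))
                        (eq_ind_r b h (subr0 (r * s))).
  by exists t.
have step : forall I : R -> Prop, (forall x, I x -> b x) -> forall x, p_next S I x -> b x.
  move=> I hIb x [a [c [ha [hc e]]]].
  have hba : b a by apply: hz; apply: Al_assl => //; exact: (assl_Al hb hIb ha).
  have hbc : b c by apply: hAr; exact: (assr_Ar hb hIb hc).
  rewrite -(subrK (a + c) x); apply: (idD hb); first exact: hIb.
  exact: idD.
elim=> [|al IH|J f IH] x /=.
- move/pone_next; apply: step => y; rewrite /zero_ideal => ->; exact: id0.
- exact: step.
- by case=> i h; exact: (IH i).
Qed.

Lemma part3 (R : nzRingType) (S : R -> Prop) : cOre S -> is_denominator_set S ->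
  forall x, pS S x <-> ass S x.
Proof.
move=> hS hden; have hS' := hS; case: hS' => S1 SM S0 oL oR.
have hZ := @zero_is_ideal R.
have hL := Al_ideal hS hZ.
set L := Al S (@zero_ideal R) in hL *.
have assL : forall x, ass S x <-> L x.
  move=> x; split; first exact: (assl_Al hZ (fun _ h => h)).
  exact: Al_assl.
have ArAl : forall r, Ar S (@zero_ideal R) r -> L r.
  move=> r [s [Ss e]]; case: hden => _ [dl _].
  have [t [ht et]] := dl r s (proj2 (memT_zero S s) Ss)
                          (eq_ind_r (@zero_ideal R) e (subr0 (r * s))).
  exists t; split; first exact/memT_zero.
  by move: et; rewrite /eqm subr0.
have step : forall I : R -> Prop, (forall x, I x -> L x) -> forall x, p_next S I x -> L x.
  move=> I hIL x [a [c [ha [hc e]]]].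
  have hLa : L a.
    have [s [Ss [s0 [Ss0 h0]]]] := assl_Al hL hIL ha.
    by exists (s0 * s); split; [exact: SM | rewrite /zero_ideal -mulrA].
  have hLc : L c.
    have [s [Ss [s0 [Ss0 h0]]]] := assr_Ar hL hIL hc.
    have [s1 [Ss1 h1]] : L (s0 * c).
      by apply: ArAl; exists s; split => //; rewrite /zero_ideal -mulrA.
    by exists (s1 * s0); split; [exact: SM | rewrite /zero_ideal -mulrA].
  rewrite -(subrK (a + c) x); apply: (idD hL); first exact: hIL.
  exact: idD.
have pa_L : forall al x, p_alpha S al x -> L x.
  elim=> [|al IH|J f IH] x /=.
  - move/pone_next; apply: step => y; rewrite /zero_ideal => ->; exact: id0.
  - exact: step.
  - by case=> i h; exact: (IH i).
move=> x; split.
  by case=> al h; apply/assL; exact: pa_L h.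
move=> h; exists Defs.ord1; exists x, 0; split => //.
split; last by rewrite addr0.
by apply: Ar_assr => //; exists 1; split => //; rewrite /zero_ideal mul0r.
Qed.

Unset Implicit Arguments.

Theorem theorem4p15 (R : nzRingType) (S : R -> Prop) :
  is_ore_set S ->
  (exists b, J_set S b) /\
  (J_set S (pS S) /\ (forall b, J_set S b -> forall x, pS S x -> b x)) /\
  (forall a : R -> Prop, is_denominator_set S ->
     (forall x, ass S x <-> a x) -> forall x, pS S x <-> a x).
Proof.
move=> hore; have hS := cOreP hore.
have hJ := pS_J hS.
split; first by exists (pS S).
split; first by split => // b hb x [al hx]; exact: (least hS hb hx).
move=> a hden ha x; rewrite part3 //; exact: ha.
Qed.
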